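(* Let $0<\epsilon\le 1/2$, let $r=\lceil 2^{22}/\epsilon^2\rceil$ and $\gamma=2r+1$, and let $\delta\ge 0$. Consider a population of agents holding opinions in $\{0,1\}$, in which the fraction of agents holding the correct opinion $\mathcal{B}$ is at least $1/2+\delta$. Take $\gamma$ independent noisy samples, each obtained by choosing an agent uniformly at random from the population and reading its opinion through a channel that flips the bit independently with probability at most $1/2-\epsilon$. Then the probability that the majority of the $\gamma$ samples equals $\mathcal{B}$ is at least $\min\{1/2+4\delta,\ 1/2+1/100\}$.
   Context: The ''bias towards the correct opinion'' of a population being at least $\delta$ means that the fraction of its members holding the correct opinion $\mathcal{B}$ is at least $1/2+\delta$. *)

(* Defs.v *)
From HB Require Import structures.
From mathcomp Require Import all_boot all_order all_algebra.
Set Implicit Arguments. Unset Strict Implicit. Unset Printing Implicit Defensive.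
Import Order.TTheory GRing.Theory Num.Theory.
Local Open Scope ring_scope.

Definition frac_correct (R : numFieldType) (n : nat) (op : 'I_n -> bool) (B : bool) : R :=
  (#|[set i | op i == B]|)%:R / n%:R.

Definition observed (n g : nat) (op : 'I_n -> bool)
  (a : {ffun 'I_g -> 'I_n}) (f : {ffun 'I_g -> bool}) (k : 'I_g) : bool :=
  op (a k) (+) f k.

Definition majority_is (n g : nat) (op : 'I_n -> bool) (B : bool)
  (a : {ffun 'I_g -> 'I_n}) (f : {ffun 'I_g -> bool}) : bool :=
  (g < 2 * #|[set k | observed op a f k == B]|)%N.

(* Probability, over g independent samples (agent chosen uniformly at random,
   then the bit flipped independently with probability eta), that the majority
   of the observed samples equals B. *)
Definition maj_prob (R : numFieldType) (n g : nat) (op : 'I_n -> bool)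
  (eta : R) (B : bool) : R :=
  \sum_(a : {ffun 'I_g -> 'I_n}) \sum_(f : {ffun 'I_g -> bool})
     ((n%:R)^-1 ^+ g * (\prod_(k < g) (if f k then eta else 1 - eta)))
     * (majority_is op B a f)%:R.

(* Main.v *)
Set Warnings "-all".
Require Import Defs.
From HB Require Import structures.
From mathcomp Require Import all_boot all_order all_algebra.
From mathcomp Require Import ring lra zify.
Import Order.TTheory GRing.Theory Num.Theory.
Local Open Scope ring_scope.

Section Bin.
Variable R : realFieldType.
Variables p q : R.

Definition E n j : R := 'C(n,j)%:R * p^+j * q^+(n-j).
Definition T n t : R := \sum_(t <= j < n.+1) E n j.

Lemma T_split n t : T n t = E n t + T n t.+1.
Proof.
rewrite /T; case: (ltnP t n.+1) => h; first by rewrite big_ltn.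
rewrite !big_geq //; last exact: leqW.
by rewrite /E bin_small // mul0r mul0r addr0.
Qed.

Lemma E_succ n j : E n.+1 j.+1 = p * E n j + q * E n j.+1.
Proof.
rewrite /E binS natrD subSS.
case: (ltnP j n) => h.
  have -> : (n - j = (n - j.+1).+1)%N by lia.
  rewrite !exprS; ring.
by rewrite (bin_small (n := n) (m := j.+1)) // exprS; ring.
Qed.

Lemma T_ext n t : \sum_(t <= j < n.+2) E n j = T n t.
Proof.
case: (ltnP n.+1 t) => h.
  by rewrite /T !big_geq // ltnW.
by rewrite big_nat_recr //= /E bin_small // !mul0r addr0.
Qed.

Lemma T_succ n t : T n.+1 t.+1 = p * T n t + q * T n t.+1.
Proof.
rewrite /T big_add1 /=.
under eq_bigr do rewrite E_succ.
rewrite big_split /= -!mulr_sumr; congr (_ + _ * _).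
by rewrite -/(T n t.+1) -(T_ext n t.+1) big_add1.
Qed.

Hypothesis pq1 : p + q = 1.

Lemma T_succ' n t : T n.+1 t.+1 = T n t.+1 + p * E n t.
Proof.
rewrite T_succ (T_split n t).
have -> : q = 1 - p by rewrite -pq1; ring.
ring.
Qed.

Lemma S_rec r : T (r.+1.*2.+1) r.+2 = T r.*2.+1 r.+1 + (p - q) * 'C(r.*2.+1, r)%:R * (p*q)^+r.+1.
Proof.
have -> : (r.+1.*2.+1 = (r.*2.+1).+2)%N by rewrite doubleS.
rewrite T_succ' T_succ' (T_split r.*2.+1 r.+1).
have e1 : 'C(r.*2.+1, r.+1) = 'C(r.*2.+1, r).
  rewrite -{1}(bin_sub (n := r.*2.+1) (m := r)); last by lia.
  congr binomial; lia.
have e2 : 'C(r.*2.+2, r.+1) = ('C(r.*2.+1, r) * 2)%N.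
  by rewrite binS e1; lia.
rewrite /E e1 e2.
have -> : (r.*2.+1 - r.+1 = r)%N by lia.
have -> : (r.*2.+2 - r.+1 = r.+1)%N by lia.
have -> : q = 1 - p by rewrite -pq1; ring.
rewrite natrM exprMn !exprS.
ring.
Qed.

Lemma S_closed r : T r.*2.+1 r.+1 = p + (p - q) * \sum_(0 <= k < r) 'C(k.*2.+1, k)%:R * (p*q)^+k.+1.
Proof.
elim: r => [|r IH].
  rewrite big_geq // mulr0 addr0 /T big_ltn // big_geq // /E bin1 subnn expr0 expr1. by rewrite /= mulr1 addr0 mul1r.
have H := S_rec r. rewrite H IH big_nat_recr //=; ring.
Qed.

End Bin.
Section An.
Variable R : realFieldType.

Definition a k : R := 'C(k.*2.+1, k)%:R / 4^+k.+1.

Lemma binrec k : ((k+2) * 'C(k.*2.+3, k.+1) = 2*(2*k+3) * 'C(k.*2.+1, k))%N.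
Proof.
have h1 := mul_bin_diag (k.*2.+3) k.
have h2 := mul_bin_left (k.*2.+2) k.
have e1 : 'C(k.*2.+1, k.+1) = 'C(k.*2.+1, k).
  rewrite -{1}(bin_sub (n := k.*2.+1) (m := k)); last by lia.
  congr binomial; lia.
have h3 : 'C(k.*2.+2, k.+1) = ('C(k.*2.+1, k) * 2)%N by rewrite binS e1; lia.
simpl in h1.
have e4 : (k.*2.+2 - k = k + 2)%N by lia.
rewrite e4 in h2.
move: h1 h2 h3.
set C3 := 'C(k.*2.+3, k.+1). set A := 'C(k.*2.+2, k). set Bb := 'C(k.*2.+2, k.+1).
set C1 := 'C(k.*2.+1, k).
move=> *. nia.
Qed.

Lemma a_succ k : a k.+1 = a k * (2 * k%:R + 3) / (2 * k%:R + 4).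
Proof.
rewrite /a.
have h := binrec k.
have hR : (k%:R + 2) * 'C(k.*2.+3, k.+1)%:R = 2 * (2 * k%:R + 3) * 'C(k.*2.+1, k)%:R :> R.
  have := congr1 (fun n : nat => n%:R : R) h. rewrite !natrM natrD. move=> ->.
  rewrite natrD natrM. done.
have hk : k%:R + 2 != 0 :> R by rewrite gt_eqF // ltr_wpDl.
have -> : 'C(k.*2.+3, k.+1)%:R = 2 * (2 * k%:R + 3) * 'C(k.*2.+1, k)%:R / (k%:R + 2) :> R.
  by rewrite -hR; field.
rewrite exprS.
field.
have k0 : 0 <= k%:R :> R := ler0n _ _.
apply/and3P; split => //; first by rewrite gt_eqF //; lra.
by rewrite expf_neq0 // pnatr_eq0.
Qed.

Lemma a_pos k : 0 < a k.
Proof.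
rewrite /a divr_gt0 // ?exprn_gt0 // ltr0n bin_gt0; lia.
Qed.

Lemma a_le k : a k.+1 <= a k.
Proof.
have k0 : 0 <= k%:R :> R := ler0n _ _.
have := a_pos k.
rewrite a_succ ler_pdivrMr; last lra.
move=> h; nra.
Qed.

Lemma a_mono j m : a (j + m) <= a j.
Proof.
elim: m => [|m IH]; first by rewrite addn0.
rewrite addnS; exact: le_trans (a_le _) IH.
Qed.

Lemma a_sq k : 1 <= a k ^+ 2 * (16 * (k%:R + 1)).
Proof.
elim: k => [|k IH].
  have -> : a 0 = 1/4 by rewrite /a bin0 expr1.
  rewrite add0r expr2; lra.
have k0 : 0 <= k%:R :> R := ler0n _ _.
rewrite a_succ.
have -> : (k.+1)%:R = k%:R + 1 :> R by rewrite -natr1.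
set s := a k.
have -> : (s * (2 * k%:R + 3) / (2 * k%:R + 4)) ^+ 2 * (16 * (k%:R + 1 + 1))
   = (s^+2 * (2 * k%:R + 3)^+2 * (16 * (k%:R + 2))) / (2 * k%:R + 4)^+2.
  by field; rewrite gt_eqF //; lra.
rewrite ler_pdivlMr; last by rewrite exprn_gt0 //; lra.
rewrite mul1r.
have : ((2 * k%:R + 4) ^+ 2 * (k%:R + 1) : R) <= (2 * k%:R + 3) ^+ 2 * (k%:R + 2).
  have -> : (2 * k%:R + 3) ^+ 2 * (k%:R + 2) = (2 * k%:R + 4) ^+ 2 * (k%:R + 1) + (k%:R + 2) :> R by ring.
  lra.
move: IH; rewrite -/s => IH h.
have hs : 0 <= s ^+ 2 * 16 by nra.
nra.
Qed.

Definition Sg (y : R) m := \sum_(0 <= k < m) a k * (1 - 4 * y^+2)^+k.+1.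

Lemma bern (x : R) m : 0 <= x -> x <= 1 -> 1 - m%:R * x <= (1 - x)^+m.
Proof.
move=> x0 x1; elim: m => [|m IH]; first by rewrite mul0r subr0 expr0.
rewrite exprS -natr1.
have h0 : 0 <= m%:R :> R := ler0n _ _.
nra.
Qed.

Lemma Sg_ge0 y m : 0 <= y -> y <= 1/2 -> 0 <= Sg y m.
Proof.
move=> y0 y1; rewrite /Sg; apply: sumr_ge0 => k _.
apply: mulr_ge0; first exact: ltW (a_pos k).
apply: exprn_ge0; nra.
Qed.

Lemma Sg_mono y m r : 0 <= y -> y <= 1/2 -> (m <= r)%N -> Sg y m <= Sg y r.
Proof.
move=> y0 y1 mr; rewrite /Sg [X in _ <= X](big_cat_nat _ (n := m)) //= lerDl.
apply: sumr_ge0 => k _.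
apply: mulr_ge0; first exact: ltW (a_pos k).
apply: exprn_ge0; nra.
Qed.

Lemma Sg_lb y m : 0 <= y -> y <= 1/2 -> (0 < m)%N ->
  m%:R * a m.-1 * (1 - 4 * m%:R * y^+2) <= Sg y m.
Proof.
move=> y0 y1 m0.
set v := 1 - 4 * y ^+ 2.
have v0 : 0 <= v by rewrite /v; nra.
have v1 : v <= 1 by rewrite /v; nra.
have h : \sum_(0 <= k < m) (a m.-1 * v^+m) <= Sg y m.
  apply: ler_sum_nat => k /andP [_ km].
  apply: ler_pM; first exact: ltW (a_pos _).
  - exact: exprn_ge0.
  - have -> : m.-1 = (k + (m.-1 - k))%N by lia.
    exact: a_mono.
  - by apply: ler_wiXn2l.
apply: le_trans h.
rewrite sumr_const_nat subn0 -mulr_natr.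
have am := a_pos m.-1.
have hb := bern (4 * y^+2) m (ltac:(nra)) (ltac:(nra)).
have hm : 0 <= m%:R :> R := ler0n _ _.
rewrite -/v in hb.
have : 0 <= m%:R * a m.-1 by nra.
nra.
Qed.

Lemma exists_step (P : nat -> bool) r : P 0 -> ~~ P r -> exists m, [/\ (m < r)%N, P m & ~~ P m.+1].
Proof.
move=> P0; elim: r => [|r IH]; first by rewrite P0.
move=> nPr.
case: (boolP (P r)) => Pr.
  by exists r.
have [m [mr Pm nPm]] := IH Pr.
by exists m; split => //; apply: ltnW.
Qed.

Lemma K64 : 64 <= (2:R)^+22.
Proof.
have -> : (22 = 6 + 16)%N by [].
rewrite exprD.
have h : 1 <= (2:R)^+16 by rewrite exprn_ege1 //; lra.
have -> : (2:R)^+6 = 64 by rewrite !exprS expr0; lra.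
nra.
Qed.

Lemma sqle (x c : R) : 0 <= x -> 0 <= c -> c^+2 <= x^+2 -> c <= x.
Proof. move=> *; nra. Qed.

Lemma final (eps delta y : R) r : 0 < eps -> 0 <= delta -> 0 <= y -> y <= 1/2 ->
  2*eps*delta <= y -> 2^+22 / eps^+2 <= r%:R ->
  (4*delta <= y * (1 + 2 * Sg y r)) \/ (1/100 <= y*(1+2*Sg y r)).
Proof.
move=> e0 d0 y0 y1 hy hr.
have S0 := Sg_ge0 y r y0 y1.
have hre : 64 <= r%:R * eps^+2.
  have := K64; move: hr; rewrite ler_pdivrMr ?exprn_gt0 //; lra.
have r0 : (0 < r)%N.
  have : 0 < r%:R :> R.
    apply: (@lt_le_trans _ _ (2^+22 / eps^+2)) => //.
    by rewrite divr_gt0 // exprn_gt0.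
  by rewrite ltr0n.
case: (lerP (1/100) y) => hy1.
  by right; nra.
have hrR : 0 <= r%:R :> R := ler0n _ _.
case: (lerP (8 * r%:R * y^+2) 1) => hr8.
  left.
  have hlb := Sg_lb y r y0 y1 r0.
  have ha := a_sq r.-1.
  rewrite natr1 prednK // in ha.
  have apos := a_pos r.-1.
  set A := a r.-1 in hlb ha apos.
  set X := r%:R * A in hlb.
  have X0 : 0 <= X by rewrite /X; nra.
  have hX : r%:R <= X^+2 * 16 by rewrite /X; nra.
  have h1 : r%:R * eps^+2 <= X^+2 * 16 * eps^+2 by rewrite ler_pM2r // exprn_gt0.
  have hXe2 : 4 <= (X * eps)^+2 by rewrite exprMn; nra.
  have hXe0 : 0 <= X * eps by apply: mulr_ge0 => //; exact: ltW.
  have hXe : 2 <= X * eps by apply: sqle => //; lra.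
  have hS : X / 2 <= Sg y r by nra.
  have : y * X <= y * (1 + 2 * Sg y r) by nra.
  have : 2 * delta * (X * eps) <= y * X by nra.
  nra.
right.
have [m [mr Pm nPm]] := exists_step (fun m => 8 * m%:R * y^+2 <= 1) r
   (ltac:(by rewrite /= mulr0 mul0r ler01)) (ltac:(by rewrite -ltNge)).
rewrite /= in Pm nPm; rewrite -ltNge -natr1 in nPm.
have hmR : 0 <= m%:R :> R := ler0n _ _.
have m0 : (0 < m)%N.
  rewrite lt0n; apply/negP => /eqP me; rewrite me /= in nPm. move: nPm; clear -y0 hy1; rewrite expr2; nra.
have hlb := Sg_lb y m y0 y1 m0.
have ha := a_sq m.-1.
rewrite natr1 prednK // in ha.
have apos := a_pos m.-1.
set A := a m.-1 in hlb ha apos.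
set X := m%:R * A in hlb.
have X0 : 0 <= X by rewrite /X; nra.
have hX : m%:R <= X^+2 * 16 by rewrite /X; nra.
have hmono := Sg_mono y m r y0 y1 (ltnW mr).
have hS : X / 2 <= Sg y r by nra.
have : y * X <= y * (1 + 2 * Sg y r) by nra.
have hmy : 1/8 - y^+2 <= m%:R * y^+2 by nra.
have hh : (1/100)^+2 <= (y * X)^+2 by nra.
have : 1/100 <= y*X by apply: sqle => //; [apply: mulr_ge0 | lra].
lra.
Qed.
End An.
Lemma sum_if (R : realFieldType) n (op : 'I_n -> bool) B (x z : R) :
  \sum_(i < n) (if op i == B then x else z) = x *+ #|[set i | op i == B]| + z *+ (n - #|[set i | op i == B]|).
Proof.
rewrite (bigID (fun i => op i == B)).
rewrite (eq_bigr (fun _ => x)); last by move=> i /= ->.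
rewrite [X in _ + X = _](eq_bigr (fun _ => z)); last by move=> i /= /negbTE ->.
rewrite !sumr_const. congr (_ *+ _ + _ *+ _).
  by apply: eq_card => i; rewrite inE.
have hc := cardsC [set i | op i == B]; rewrite card_ord in hc.
have -> : (n - #|[set i | op i == B]| = #|~: [set i | op i == B]|)%N by rewrite -{1}hc addKn.
by apply: eq_card => i; rewrite !inE.
Qed.

Lemma ind_sum (R : realFieldType) g (X : {set 'I_g}) (b : 'I_g -> bool) :
  X = [set k | b k] ->
  ((g < 2 * #|X|)%N)%:R = \sum_(S : {set 'I_g} | (g < 2 * #|S|)%N) \prod_(k < g) ((b k) == (k \in S))%:R :> R.
Proof.
move=> hX.
have eP : forall S : {set 'I_g}, \prod_(k < g) ((b k) == (k \in S))%:R = (X == S)%:R :> R.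
  move=> S; case: eqP => [<-|neq].
    by apply: big1 => k _; rewrite hX inE eqxx.
  have /existsP [k hk] : [exists k, ~~ ((b k) == (k \in S))].
    rewrite -negb_forall; apply/negP => /forallP h; apply: neq; apply/setP => k.
    by rewrite hX inE; apply/eqP; exact: h.
  by rewrite (bigD1 k) //= (negbTE hk) mul0r.
under eq_bigr do rewrite eP.
rewrite big_mkcond /= (bigD1 X) //= eqxx big1 ?addr0.
  by case: (g < 2 * #|X|)%N.
move=> S /negbTE hS; rewrite eq_sym hS; by case: ifP.
Qed.

Lemma aux (R : realFieldType) (x e : R) (o b s : bool) :
  x * e * ((o (+) true == b) == s)%:R + x * (1 - e) * ((o (+) false == b) == s)%:R
  = x * (if o == b then (if s then 1 - e else e) else (if s then e else 1 - e)).
Proof. by case: o; case: b; case: s => /=; ring. Qed.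

Lemma maj_prob_sets (R : realFieldType) n g (op : 'I_n -> bool) (eta : R) B :
  (0 < n)%N ->
  let c := #|[set i | op i == B]| in
  let pp := (c%:R * (1 - eta) + (n - c)%:R * eta) / n%:R in
  maj_prob g op eta B = \sum_(S : {set 'I_g} | (g < 2 * #|S|)%N) pp ^+ #|S| * (1 - pp) ^+ (g - #|S|).
Proof.
move=> n0 c pp.
rewrite /maj_prob.
have ind : forall a f, (majority_is op B a f)%:R = \sum_(S : {set 'I_g} | (g < 2 * #|S|)%N)
   \prod_(k < g) ((op (a k) (+) f k == B) == (k \in S))%:R :> R.
  by move=> a f; apply: ind_sum.
under eq_bigr do under eq_bigr do rewrite ind mulr_sumr.
under eq_bigr do rewrite exchange_big.
rewrite exchange_big; apply: eq_bigr => S _.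
pose G := fun (k : 'I_g) (i : 'I_n) (b : bool) =>
  n%:R^-1 * (if b then eta else 1 - eta) * ((op i (+) b == B) == (k \in S))%:R.
have hG : forall (a : {ffun 'I_g -> 'I_n}) (f : {ffun 'I_g -> bool}),
  n%:R^-1 ^+ g * (\prod_(k < g) (if f k then eta else 1 - eta)) *
  \prod_(k < g) ((op (a k) (+) f k == B) == (k \in S))%:R = \prod_(k < g) G k (a k) (f k).
  move=> a f; have -> : n%:R^-1 ^+ g = \prod_(k < g) n%:R^-1 :> R by rewrite prodr_const card_ord.
  rewrite /G -!big_split /=.
  done.
under eq_bigr do under eq_bigr do rewrite hG.
rewrite (eq_bigr (fun a : {ffun 'I_g -> 'I_n} => \prod_(k < g) \sum_(b : bool) G k (a k) b)); last first.
  by move=> a _; rewrite bigA_distr_bigA.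
rewrite -(bigA_distr_bigA (fun k i => \sum_(b : bool) G k i b)) /=.
have cn : (c <= n)%N by rewrite /c -[X in (_ <= X)%N](card_ord n) max_card.
have nR : n%:R != 0 :> R by rewrite pnatr_eq0 -lt0n.
have hk : forall k, \sum_(j < n) \sum_(b : bool) G k j b = if k \in S then pp else 1 - pp.
  move=> k; under eq_bigr do rewrite big_bool /G /= aux.
  rewrite -mulr_sumr sum_if -/c -(mulr_natr _ c) -(mulr_natr _ (n - c)) /pp natrB //.
  by case: (k \in S); field.
under eq_bigr do rewrite hk.
rewrite (bigID (fun k => k \in S)) /=.
rewrite (eq_bigr (fun _ => pp)); last by move=> i ->.
rewrite [X in _ * X = _](eq_bigr (fun _ => 1 - pp)); last by move=> i /negbTE ->.
rewrite !prodr_const; congr (_ ^+ _ * _ ^+ _).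
have hc := cardsC S; rewrite card_ord in hc.
have -> : (g - #|S| = #|~: S|)%N by rewrite -{1}hc addKn.
by apply: eq_card => i; rewrite !inE.
Qed.

Lemma group_card (R : realFieldType) g (P : pred nat) (h : nat -> R) :
  \sum_(S : {set 'I_g} | P #|S|) h #|S| = \sum_(j < g.+1 | P j) 'C(g, j)%:R * h j.
Proof.
rewrite (partition_big (fun S : {set 'I_g} => (inord #|S| : 'I_g.+1)) predT) //=.
rewrite [RHS]big_mkcond; apply: eq_bigr => j _.
have cS : forall S : {set 'I_g}, (#|S| < g.+1)%N.
  by move=> S; rewrite ltnS -[X in (_ <= X)%N](card_ord g) max_card.
rewrite (eq_bigl (fun S : {set 'I_g} => P j && (#|S| == j))); last first.
  move=> S /=; rewrite -(inj_eq val_inj) /= inordK //.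
  by case: eqP => [->|]; rewrite ?andbT ?andbF.
case: (P j); last by rewrite big_pred0.
rewrite (eq_bigr (fun _ => h j)); last by move=> S /= /eqP ->.
rewrite sumr_const mulr_natl.
congr (_ *+ _).
rewrite -[X in 'C(X, _)](card_ord g) -card_draws.
by apply: eq_card => S; rewrite inE.
Qed.

Theorem mainTheorem4 (R : archiRealFieldType) (eps delta eta : R) (n : nat)
  (op : 'I_n -> bool) (B : bool) :
  0 < eps -> eps <= 1 / 2 -> 0 <= delta ->
  (0 < n)%N ->
  1 / 2 + delta <= frac_correct R op B ->
  0 <= eta -> eta <= 1 / 2 - eps ->
  let r := `|Num.ceil (2 ^+ 22 / eps ^+ 2)|%N in
  let gamma := (2 * r + 1)%N in
  Num.min (1 / 2 + 4 * delta) (1 / 2 + 1 / 100) <= maj_prob gamma op eta B.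
Proof.
move=> e0 e1 d0 n0 hfr eta0 eta1.
cbv zeta.
set r := `|Num.ceil _|%N.
set gamma := (2 * r + 1)%N.
rewrite (@maj_prob_sets _ n gamma op eta B n0) /=.
set c := #|[set i | op i == B]|.
set pp := (c%:R * (1 - eta) + (n - c)%:R * eta) / n%:R.
rewrite (group_card _ _ (fun j => (gamma < 2*j)%N) (fun j => pp^+j * (1-pp)^+(gamma - j))).
have hT : \sum_(j < gamma.+1 | (gamma < 2 * j)%N) 'C(gamma, j)%:R * (pp ^+ j * (1 - pp) ^+ (gamma - j))
   = T _ pp (1 - pp) gamma r.+1.
  rewrite /T big_geq_mkord; apply: eq_big => j.
    by apply/idP/idP => /= h; rewrite /gamma in h *; lia.
  by move=> _; rewrite /E mulrA.
rewrite hT.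
have -> : gamma = r.*2.+1 by rewrite /gamma -mul2n addn1.
rewrite S_closed; last by ring.
set y := pp - 1/2.
have hsum : \sum_(0 <= k < r) 'C(k.*2.+1, k)%:R * (pp * (1 - pp)) ^+ k.+1 = Sg R y r.
  rewrite /Sg; apply: eq_bigr => k _; rewrite /a.
  have -> : pp * (1 - pp) = (1 - 4 * y^+2) / 4 by rewrite /y; field.
  rewrite expr_div_n; field.
  by rewrite expf_neq0 // pnatr_eq0.
rewrite hsum.
have hc : (c <= n)%N by rewrite /c -[X in (_ <= X)%N](card_ord n) max_card.
have nR : 0 < n%:R :> R by rewrite ltr0n.
set fr := c%:R / n%:R : R.
have hfr' : frac_correct R op B = fr by [].
rewrite hfr' in hfr.
have fr1 : fr <= 1 by rewrite /fr ler_pdivrMr // mul1r ler_nat.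
have hpp : pp = fr * (1 - eta) + (1 - fr) * eta.
  by rewrite /pp /fr natrB //; field; rewrite gt_eqF.
have hyf : y = (fr - 1/2) * (1 - 2 * eta).
  by rewrite /y hpp; field.
have y0 : 0 <= y by rewrite hyf; nra.
have y1 : y <= 1/2 by rewrite hyf; nra.
have hy : 2 * eps * delta <= y by rewrite hyf; nra.
have hr : 2 ^+ 22 / eps ^+ 2 <= r%:R.
  rewrite /r natr_absz ger0_norm; first exact: ceil_ge.
  rewrite ceil_ge0; apply: (@lt_le_trans _ _ 0); first by lra.
  by apply/ltW; rewrite divr_gt0 // exprn_gt0.
have hpp' : pp = y + 1/2 by rewrite /y; ring.
rewrite hpp' ge_min.
case: (@final _ _ _ _ _ e0 d0 y0 y1 hy hr : _ \/ _) => h; apply/orP; [left|right]; lra.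
Qed.
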